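(* Consider a Fragile multi-CPR Game $G^{(2)}$ with $n\ge1$ players and $m\ge1$ CPRs satisfying the Assumption below, with constraint policies $\vartheta_i$ as defined below, and assume $m\le n$. Let $\mathcal{N}(G^{(2)})\subset\mathcal{C}_n\subset\mathbb{R}^{nm}$ be the set of all Generalized Nash equilibria of $G^{(2)}$. Then the $(n\cdot m)$-dimensional Lebesgue measure of $\mathcal{N}(G^{(2)})$ is zero.
   Context: Let $[k]=\{1,\dots,k\}$. Let $C_m=\{(x_1,\dots,x_m)\in[0,1]^m:\sum_{j}x_j\le1\}$, $\mathcal{C}_n=\prod_{i\in[n]}C_m$, $\mathcal{C}_{-i}=\prod_{[n]\setminus\{i\}}C_m$. A strategy profile is $\mathbf{x}=(\mathbf{x}_1,\dots,\mathbf{x}_n)\in\mathcal{C}_n$, $\mathbf{x}_i=(x_{i1},\dots,x_{im})$; write $\mathbf{x}=(\mathbf{x}_i,\mathbf{x}_{-i})$. Put $\mathbf{x}_T^{(j)}=\sum_{i}x_{ij}$, $\mathbf{x}_T^{j|i}=\sum_{\ell\ne i}x_{\ell j}$. Each CPR $j$ has a return rate $\mathcal{R}_j(t)>1$ and failure probability $p_j(t)\in[0,1]$; each player $i$ has parameters $a_i,k_i$. Effective rate: $\mathcal{F}_{ij}(t)=(\mathcal{R}_j(t)-1)^{a_i}(1-p_j(t))-k_ip_j(t)$; utility: $\mathcal{V}_i(\mathbf{x}_i;\mathbf{x}_{-i})=\sum_j x_{ij}^{a_i}\mathcal{F}_{ij}(\mathbf{x}_T^{(j)})$. Assumption: (1)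 $p_j(0)=0$, $p_j(t)=1$ for $t\ge1$; (2) $a_i\in(0,1]$, $k_i>0$; (3) each $\mathcal{F}_{ij}$ (continuous on $[0,1]$) has strictly negative first and second derivatives on $(0,1)$. Let $\omega_{ij}\in(0,1)$ be the unique zero of $\mathcal{F}_{ij}$ in $(0,1)$. Active CPRs: $A(\mathbf{x}_{-i})=\{j:\mathbf{x}_T^{j|i}<\omega_{ij}\}$. Constraint policy: $\vartheta_i(\mathbf{x}_{-i})=C_m\cap\big(\prod_{j\in A(\mathbf{x}_{-i})}[0,\omega_{ij}-\mathbf{x}_T^{j|i}]\times\prod_{j\notin A(\mathbf{x}_{-i})}\{0\}\big)$. A Generalized Nash equilibrium is $\mathbf{x}^*\in\mathcal{C}_n$ with, for all $i$, $\mathbf{x}^*_i\in\vartheta_i(\mathbf{x}^*_{-i})$ and $\mathcal{V}_i(\mathbf{x}^*_i;\mathbf{x}^*_{-i})\ge\mathcal{V}_i(\mathbf{y};\mathbf{x}^*_{-i})$ for all $\mathbf{y}\in\vartheta_i(\mathbf{x}^*_{-i})$. *)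

(* Defs.v *)
From HB Require Import structures.
From mathcomp Require Import all_boot all_order all_algebra.
From mathcomp Require Import all_classical all_reals all_analysis.
Set Implicit Arguments. Unset Strict Implicit. Unset Printing Implicit Defensive.
Import Order.TTheory GRing.Theory Num.Theory numFieldNormedType.Exports.
Local Open Scope classical_set_scope.
Local Open Scope ring_scope.

Section FragileGame.
Variables (R : realType) (n m : nat).

Definition Cm (y : 'I_m -> R) : Prop :=
  (forall j, 0 <= y j <= 1) /\ \sum_(j < m) y j <= 1.

(* strategy profiles are n x m matrices, row i = x_i *)
Definition Cn (x : 'M[R]_(n, m)) : Prop := forall i, Cm (fun j => x i j).

Definition xT (x : 'M[R]_(n, m)) (j : 'I_m) : R := \sum_(l < n) x l j.
Definition xT_excl (x : 'M[R]_(n, m)) (i : 'I_n) (j : 'I_m) : R :=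
  \sum_(l < n | l != i) x l j.

Definition Feff (Rr p : 'I_m -> R -> R) (a k : 'I_n -> R)
  (i : 'I_n) (j : 'I_m) (t : R) : R :=
  (Rr j t - 1) `^ (a i) * (1 - p j t) - k i * p j t.

Definition omega (Rr p : 'I_m -> R -> R) (a k : 'I_n -> R)
  (i : 'I_n) (j : 'I_m) : R :=
  xget 0 [set w : R | 0 < w < 1 /\ Feff Rr p a k i j w = 0].

Definition utility (Rr p : 'I_m -> R -> R) (a k : 'I_n -> R)
  (i : 'I_n) (y : 'I_m -> R) (x : 'M[R]_(n, m)) : R :=
  \sum_(j < m) (y j) `^ (a i) * Feff Rr p a k i j (y j + xT_excl x i j).

Definition active (Rr p : 'I_m -> R -> R) (a k : 'I_n -> R)
  (x : 'M[R]_(n, m)) (i : 'I_n) (j : 'I_m) : Prop :=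
  xT_excl x i j < omega Rr p a k i j.

Definition vartheta (Rr p : 'I_m -> R -> R) (a k : 'I_n -> R)
  (i : 'I_n) (x : 'M[R]_(n, m)) : set ('I_m -> R) :=
  [set y | Cm y /\
     forall j, (active Rr p a k x i j ->
                  0 <= y j <= omega Rr p a k i j - xT_excl x i j) /\
               (~ active Rr p a k x i j -> y j = 0)].

Definition GNE (Rr p : 'I_m -> R -> R) (a k : 'I_n -> R) : set 'M[R]_(n, m) :=
  [set x | Cn x /\ forall i : 'I_n,
     vartheta Rr p a k i x (fun j => x i j) /\
     forall y, vartheta Rr p a k i x y ->
       utility Rr p a k i y x <= utility Rr p a k i (fun j => x i j) x].

(* Lebesgue null sets of R^{n*m} (coordinates indexed by 'I_n x 'I_m):
   S has Lebesgue (outer) measure zero iff for every eps > 0 it is covered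
   by countably many closed boxes of total volume at most eps. *)
Definition box (lo hi : 'M[R]_(n, m)) : set 'M[R]_(n, m) :=
  [set x | forall i j, lo i j <= x i j <= hi i j].
Definition box_vol (lo hi : 'M[R]_(n, m)) : R :=
  \prod_(i < n) \prod_(j < m) (hi i j - lo i j).
Definition lebesgue_null (S : set 'M[R]_(n, m)) : Prop :=
  forall eps : R, 0 < eps ->
    exists lo hi : nat -> 'M[R]_(n, m),
      (forall q i j, lo q i j <= hi q i j) /\
      S `<=` \bigcup_q box (lo q) (hi q) /\
      (forall N, \sum_(q < N) box_vol (lo q) (hi q) <= eps).

End FragileGame.

(* Main.v *)
Require Import Defs.
From HB Require Import structures.
From mathcomp Require Import all_boot all_order all_algebra.
From mathcomp Require Import all_classical all_reals all_analysis.
Import Order.TTheory GRing.Theory Num.Theory numFieldNormedType.Exports.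
Local Open Scope classical_set_scope.
Local Open Scope ring_scope.
From mathcomp Require Import lra.
From mathcomp Require Import ring.

Section Cover.
Variable R : realType.

Lemma sum_nth_le (s : seq R) K : (forall x, x \in s -> 0 <= x) ->
  \sum_(q < K) nth 0 s q <= \sum_(x <- s) x.
Proof.
elim: s K => [|x s IH] K H.
  by rewrite big_nil big1 // => q _; rewrite nth_nil.
case: K => [|K].
  by rewrite big_ord0 big_seq; apply: sumr_ge0 => y ys; apply: H.
rewrite big_ord_recl big_cons /=; apply: lerD => //.
apply: IH => y ys; apply: H; by rewrite in_cons ys orbT.
Qed.

Lemma nth_map2_prop (A B : Type) (P : B -> B -> Prop) (g1 g2 : A -> B) d s q :
  P d d -> (forall z, P (g1 z) (g2 z)) ->
  P (nth d (map g1 s) q) (nth d (map g2 s) q).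
Proof. by move=> Pd Pg; elim: s q => [|x s IH] [|q] //=. Qed.

Lemma nth_map2_eq (A B C : Type) (h : B -> B -> C) (g1 g2 : A -> B) d e s q :
  h d d = e ->
  h (nth d (map g1 s) q) (nth d (map g2 s) q) =
  nth e (map (fun z => h (g1 z) (g2 z)) s) q.
Proof. by move=> hd; elim: s q => [|x s IH] [|q] //=. Qed.

Lemma box_vol00 n m : (0 < n)%N -> (0 < m)%N -> box_vol (0 : 'M[R]_(n, m)) 0 = 0.
Proof.
move=> n0 m0; rewrite /box_vol.
rewrite (eq_bigr (fun _ => 0)); last first.
  move=> i _; rewrite (eq_bigr (fun _ => 0)); last by move=> j _; rewrite mxE subrr.
  by rewrite prodr_const card_ord expr0n eqn0Ngt m0.
by rewrite prodr_const card_ord expr0n eqn0Ngt n0.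
Qed.

Lemma cell_ok (N' : nat) (y : R) : 0 <= y <= 1 ->
  (minn (Num.truncn (y * N'.+1%:R)) N')%:R / N'.+1%:R <= y <=
  (minn (Num.truncn (y * N'.+1%:R)) N').+1%:R / N'.+1%:R.
Proof.
move=> /andP[y0 y1].
have Nr0 : (0 : R) < N'.+1%:R by rewrite ltr0Sn.
have yN0 : 0 <= y * N'.+1%:R by rewrite mulr_ge0 // ltW.
have /andP[t1 t2] := Num.Theory.truncn_itv yN0.
rewrite ler_pdivrMr // ler_pdivlMr //.
case: (leqP (Num.truncn (y * N'.+1%:R)) N') => h.
  by rewrite t1 ltW.
apply/andP; split.
  apply: le_trans t1; rewrite ler_nat; exact: ltnW.
by rewrite ler_piMl // ltW.
Qed.

Lemma graphs_null n m (T : finType) (c : T -> 'I_n * 'I_m)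
  (f : T -> 'M[R]_(n, m) -> R) (L : R) (S : set 'M[R]_(n, m)) :
  (0 < n)%N -> (0 < m)%N -> 0 <= L ->
  (forall t (x y : 'M[R]_(n, m)) (d : R), 0 <= d ->
     (forall i j, (i, j) != c t -> `|x i j - y i j| <= d) ->
     `|f t x - f t y| <= L * d) ->
  (forall x, S x -> (forall i j, 0 <= x i j <= 1) /\
      exists t, x (c t).1 (c t).2 = f t x) ->
  lebesgue_null S.
Proof.
move=> n0 m0 L0 Lip HS eps eps0.
pose N' := Num.truncn ((L + L) * #|T|%:R / eps).
pose Nr : R := N'.+1%:R.
have Nr0 : 0 < Nr by rewrite ltr0Sn.
have HN : (L + L) * #|T|%:R / eps < Nr.
  have h : 0 <= (L + L) * #|T|%:R / eps.
    by apply: divr_ge0; [apply: mulr_ge0 => //; exact: addr_ge0 | exact: ltW].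
  by have /andP[_ ->] := Num.Theory.truncn_itv h.
pose corner (u : {ffun 'I_n * 'I_m -> 'I_N'.+1}) : 'M[R]_(n, m) :=
  \matrix_(i, j) ((u (i, j))%:R / Nr).
pose I := (T * {ffun 'I_n * 'I_m -> 'I_N'.+1})%type.
pose loI (z : I) : 'M[R]_(n, m) := \matrix_(i, j)
  if (i, j) == c z.1 then (if z.2 (i, j) == ord0 then f z.1 (corner z.2) - L / Nr else 0)
  else (z.2 (i, j))%:R / Nr.
pose hiI (z : I) : 'M[R]_(n, m) := \matrix_(i, j)
  if (i, j) == c z.1 then (if z.2 (i, j) == ord0 then f z.1 (corner z.2) + L / Nr else 0)
  else (z.2 (i, j)).+1%:R / Nr.
have lohi z i j : loI z i j <= hiI z i j.
  rewrite !mxE; case: ifP => _; last by rewrite ler_pM2r ?invr_gt0 // ler_nat.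
  case: ifP => _ //; rewrite lerD2l; apply: (@le_trans _ _ 0).
    by rewrite oppr_le0 divr_ge0 // ltW.
  by rewrite divr_ge0 // ltW.
exists (fun q => nth 0 (map loI (index_enum I)) q),
       (fun q => nth 0 (map hiI (index_enum I)) q).
split; [|split].
- move=> q i j.
  apply: (@nth_map2_prop _ _ (fun a b : 'M[R]_(n, m) => a i j <= b i j)) => //.
- move=> x /HS [x01 [t xt]].
  pose k (p : 'I_n * 'I_m) : nat := minn (Num.truncn (x p.1 p.2 * Nr)) N'.
  pose u : {ffun 'I_n * 'I_m -> 'I_N'.+1} :=
    [ffun p => if p == c t then ord0 else inord (k p)].
  have cellu i j : (i, j) != c t ->
      (u (i, j) : nat)%:R / Nr <= x i j <= (u (i, j)).+1%:R / Nr.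
    move=> Nij; rewrite ffunE (negbTE Nij) inordK; last by rewrite ltnS geq_minr.
    exact: cell_ok.
  exists (index (t, u) (index_enum I)) => //.
  rewrite (nth_map (t, u)) ?index_mem ?mem_index_enum //.
  rewrite (nth_map (t, u)) ?index_mem ?mem_index_enum //.
  rewrite nth_index ?mem_index_enum //.
  move=> i j; rewrite !mxE /=.
  have [Eij|Nij] := eqVneq (i, j) (c t); last first.
    exact: cellu.
  rewrite Eij ffunE eqxx eqxx.
  have -> : i = (c t).1 by rewrite -Eij.
  have -> : j = (c t).2 by rewrite -Eij.
  rewrite xt -ler_distl.
  apply: Lip; first by rewrite invr_ge0 ltW.
  move=> i' j' Nij'; rewrite mxE.
  have /andP[h1 h2] := cellu i' j' Nij'.
  rewrite ler_distl; apply/andP; split.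
    by apply: le_trans h1; rewrite lerBlDr lerDl invr_ge0 ltW.
  by rewrite -natr1 mulrDl mul1r in h2.
- move=> K.
  pose G (t : T) (p : 'I_n * 'I_m) (kk : 'I_N'.+1) : R :=
    if p == c t then (if kk == ord0 then L / Nr + L / Nr else 0) else Nr^-1.
  pose volI (z : I) := box_vol (loI z) (hiI z).
  have volE z : volI z = \prod_(p : 'I_n * 'I_m) G z.1 p (z.2 p).
    rewrite /volI /box_vol pair_bigA /=; apply: eq_bigr => -[i j] _ /=.
    rewrite !mxE /G; case: ifP => _; last first.
      by rewrite -natr1 mulrDl mul1r addrAC subrr add0r.
    case: ifP => _; last by rewrite subrr.
    by rewrite opprB addrC addrA subrK.
  have sum_le : \sum_(q < K) box_vol [seq loI i | i <- index_enum I]`_q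
       [seq hiI i | i <- index_enum I]`_q <= \sum_(z : I) volI z.
    rewrite (eq_bigr (fun q : 'I_K => nth 0 (map volI (index_enum I)) q)); last first.
      by move=> q _; apply: nth_map2_eq; exact: box_vol00.
    have hpos : forall v, v \in map volI (index_enum I) -> 0 <= v.
      move=> v /mapP[z _ ->]; rewrite /volI /box_vol.
      apply: prodr_ge0 => i _; apply: prodr_ge0 => j _; rewrite subr_ge0; exact: lohi.
    by have := sum_nth_le _ K hpos; rewrite big_map.
  apply: (le_trans sum_le).
  rewrite (eq_bigr _ (fun z _ => volE z)).
  rewrite -(pair_bigA _ (fun t (u : {ffun 'I_n * 'I_m -> 'I_N'.+1}) => \prod_p G t p (u p))) /=.
  rewrite (eq_bigr (fun _ => L / Nr + L / Nr)); last first.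
    move=> t _; rewrite -bigA_distr_bigA /=.
    rewrite (bigD1 (c t)) //= [X in _ * X]big1 ?mulr1; last first.
      move=> p /negbTE Np; rewrite /G Np sumr_const card_ord.
      by rewrite -mulr_natl mulfV // gt_eqF.
    rewrite (bigD1 ord0) //= big1 ?addr0; first by rewrite /G /= !eqxx.
    by move=> kk /negbTE Nk; rewrite /G /= eqxx Nk.
  rewrite sumr_const -mulr_natr -mulrDl mulrAC ler_pdivrMr //.
  have -> : #|(xpredT : pred T)| = #|T| by apply: eq_card.
  rewrite ltr_pdivrMr // in HN; rewrite [eps * _]mulrC; exact: ltW.
Qed.
End Cover.
Section RealFun.
Variable R : realType.
Variable F : R -> R.
Hypothesis F0 : 0 < F 0.
Hypothesis F1 : F 1 < 0.
Hypothesis Fc : {within `[0, 1], continuous F}.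
Hypothesis Fd : forall t, 0 < t < 1 ->
  derivable F t 1 /\ derivable (derive1 F) t 1 /\ derive1 F t < 0 /\ derive1 (derive1 F) t < 0.

Lemma F_decr r s : 0 <= r -> r < s -> s <= 1 -> F s < F r.
Proof.
move=> r0 rs s1.
have [xi xiI E] : exists2 xi, xi \in `]r, s[ & F s - F r = derive1 F xi * (s - r).
  apply: MVT => //.
    move=> x; rewrite in_itv /= => /andP[rx xs].
    have /Fd[dF _] : 0 < x < 1.
      by apply/andP; split; [apply: le_lt_trans rx|apply: lt_le_trans s1].
    by rewrite derive1E; exact: derivableP.
  apply: continuous_subspaceW Fc => x /=; rewrite !in_itv /= => /andP[rx xs].
  by rewrite (le_trans r0 rx) (le_trans xs s1).
move: xiI; rewrite in_itv /= => /andP[rxi xis].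
have /Fd[_ [_ [d0 _]]] : 0 < xi < 1.
  by apply/andP; split; [apply: le_lt_trans rxi|apply: lt_le_trans s1].
rewrite -subr_lt0 E; by rewrite pmulr_llt0 // subr_gt0.
Qed.

Lemma Fd_nincr r s : 0 < r -> r < s -> s < 1 -> derive1 F s <= derive1 F r.
Proof.
move=> r0 rs s1.
have [xi xiI E] : exists2 xi, xi \in `]r, s[ &
    derive1 F s - derive1 F r = derive1 (derive1 F) xi * (s - r).
  apply: MVT => //.
    move=> x; rewrite in_itv /= => /andP[rx xs].
    have /Fd[_ [dF _]] : 0 < x < 1.
      by apply/andP; split; [apply: lt_trans rx|apply: lt_trans s1].
    by rewrite derive1E; exact: derivableP.
  apply: derivable_within_continuous => x; rewrite in_itv /= => /andP[rx xs].
  have /Fd[_ [dF _]] : 0 < x < 1.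
    by apply/andP; split; [apply: lt_le_trans rx|apply: le_lt_trans s1].
  exact: dF.
move: xiI; rewrite in_itv /= => /andP[rxi xis].
have /Fd[_ [_ [_ d0]]] : 0 < xi < 1.
  by apply/andP; split; [apply: lt_trans rxi|apply: lt_trans s1].
rewrite -subr_le0 E; apply: ltW; by rewrite pmulr_llt0 // subr_gt0.
Qed.

Definition om := xget 0 [set w : R | 0 < w < 1 /\ F w = 0].

Lemma om_spec : (0 < om < 1 /\ F om = 0).
Proof.
apply: (xgetPex 0 (P := [set w : R | 0 < w < 1 /\ F w = 0])).
have [w wI Fw] : exists2 w, w \in `[0, 1] & F w = 0.
  apply: IVT; [exact: ler01 | exact: Fc | ].
  by rewrite ge_min le_max (ltW F1) (ltW F0) orbT.
exists w; split => //; move: wI; rewrite in_itv /= => /andP[w0 w1].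
apply/andP; split.
  rewrite lt_neqAle w0 andbT; apply/eqP => w0'.
  have h : F w = F 0 by rewrite -w0'.
  by move: F0; rewrite -h Fw ltxx.
rewrite lt_neqAle w1 andbT; apply/eqP => w1'.
have h : F w = F 1 by rewrite w1'.
by move: F1; rewrite -h Fw ltxx.
Qed.

Lemma F_pos t : 0 <= t -> t < om -> 0 < F t.
Proof.
move=> t0 tom; have [/andP[_ om1] Fom] := om_spec.
by rewrite -Fom; apply: F_decr => //; exact: ltW.
Qed.

Lemma foc (a c x b : R) : 0 < a -> 0 <= c -> 0 < x -> x < b -> b + c <= 1 ->
  (forall t, 0 < t -> t < b -> t `^ a * F (t + c) <= x `^ a * F (x + c)) ->
  a * F (x + c) + x * derive1 F (x + c) = 0.
Proof.
move=> a0 c0 x0 xb bc1 Hmax.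
pose psi := ((@powR R) ^~ a) * (F \o shift c).
have hder t : 0 < t -> t < b -> is_derive t 1 psi
    (t `^ a *: (derive1 F (t + c) * 1) + F (t + c) *: (a * t `^ (a - 1))).
  move=> t0 tb.
  have tc : 0 < t + c < 1.
    apply/andP; split; lra.
  apply: is_deriveM; first exact: is_derive1_powR.
  apply: is_derive1_comp; last exact: is_derive_shift.
  have /Fd[dF _] := tc.
  by rewrite derive1E; exact: derivableP.
have h1 := hder x x0 xb.
have h2 : is_derive x 1 psi 0.
  apply: (@derive1_at_max _ psi 0 b x).
  - exact: ltW (lt_trans x0 xb).
  - by move=> t; rewrite in_itv /= => /andP[t0 tb]; have [] := hder t t0 tb.
  - by rewrite in_itv /= x0 xb.
  - move=> t; rewrite in_itv /= => /andP[t0 tb]; rewrite /psi !mulrfctE /=.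
    exact: Hmax.
have e := etrans (esym (@derive_val _ _ _ _ _ _ _ h2)) (@derive_val _ _ _ _ _ _ _ h1).
have pr : (a == 1) ==> (x != 0) by apply/implyP => _; rewrite gt_eqF.
move: e; rewrite (powRB pr) powRr1 ?ltW // => e.
have P0 : 0 < x `^ a by apply: powR_gt0.
have : x `^ a * (a * F (x + c) + x * derive1 F (x + c)) = 0.
  have e' : 0 = x `^ a * (derive1 F (x + c) * 1) +
      F (x + c) * (a * (x `^ a / x)) := e.
  have -> : x `^ a * (a * F (x + c) + x * derive1 F (x + c)) =
      x * (x `^ a * (derive1 F (x + c) * 1) + F (x + c) * (a * (x `^ a / x))).
    by field; rewrite gt_eqF.
  by rewrite -e' mulr0.
by move/eqP; rewrite mulf_eq0 gt_eqF //= => /eqP.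
Qed.

End RealFun.
Section Root.
Variable R : realType.

Lemma g_mono (a Fr Fs Dr Ds : R) : 0 < a -> 0 < Fs -> Fs < Fr -> Ds <= Dr -> Dr < 0 ->
  - a * Fs / Ds <= - a * Fr / Dr.
Proof.
move=> a0 Fs0 FsFr DsDr Dr0.
have Ds0 : Ds < 0 by apply: le_lt_trans DsDr Dr0.
rewrite -!mulrA !mulNr -!mulrN ler_pM2l // -!invrN.
apply: (@le_trans _ _ (Fs / - Dr)).
  by rewrite ler_pM2l // lef_pV2 ?posrE ?oppr_gt0 // lerN2.
by rewrite ler_pM2r ?invr_gt0 ?oppr_gt0 // ltW.
Qed.

Lemma root_unique n (F D : 'I_n -> R -> R) (a om : 'I_n -> R) (r s : R) :
  (forall i, 0 < a i) ->
  (forall i t, 0 < t -> t < om i -> 0 < F i t) ->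
  (forall i u v, 0 < u -> u < v -> v < om i -> F i v < F i u /\ D i v <= D i u) ->
  (forall i t, 0 < t -> t < om i -> D i t < 0) ->
  (0 < r /\ (forall i, r < om i) /\ r = \sum_i (- a i * F i r / D i r)) ->
  (0 < s /\ (forall i, s < om i) /\ s = \sum_i (- a i * F i s / D i s)) ->
  r = s.
Proof.
move=> a0 Fpos Fmono Dneg.
wlog: r s / r < s.
  move=> H Pr Ps; case: (ltgtP r s) => [rs|sr|//].
    exact: H.
  by apply/esym; apply: H.
move=> rs [r0 [rom re]] [s0 [som se]].
have : s <= r.
  rewrite [X in X <= _]se [X in _ <= X]re; apply: ler_sum => i _.
  have [h1 h2] := Fmono i r s r0 rs (som i).
  apply: g_mono => //; [exact: Fpos|exact: Dneg].
by rewrite leNgt rs.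
Qed.
End Root.
Section Game.
Variables (R : realType) (n m : nat) (Rr p : 'I_m -> R -> R) (a k : 'I_n -> R).
Hypothesis HR : forall j t, 0 <= t -> 1 < Rr j t.
Hypothesis Hp0 : forall j, p j 0 = 0.
Hypothesis Hp1 : forall j t, 1 <= t -> p j t = 1.
Hypothesis Ha : forall i, 0 < a i <= 1.
Hypothesis Hk : forall i, 0 < k i.
Hypothesis Hc : forall i j, {within `[0, 1], continuous (Feff Rr p a k i j)}.
Hypothesis Hd : forall i j t, 0 < t < 1 ->
     derivable (Feff Rr p a k i j) t 1 /\
     derivable (derive1 (Feff Rr p a k i j)) t 1 /\
     derive1 (Feff Rr p a k i j) t < 0 /\
     derive1 (derive1 (Feff Rr p a k i j)) t < 0.

Local Notation FF i j := (Feff Rr p a k i j).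
Local Notation ome i j := (omega Rr p a k i j).

Lemma FF0 i j : 0 < FF i j 0.
Proof.
rewrite /Feff Hp0 subr0 mulr1 mulr0 subr0; apply: powR_gt0.
by rewrite subr_gt0; apply: HR.
Qed.

Lemma FF1 i j : FF i j 1 < 0.
Proof. by rewrite /Feff Hp1 // subrr mulr0 sub0r mulr1 oppr_lt0. Qed.

Lemma ome_spec i j : 0 < ome i j < 1 /\ FF i j (ome i j) = 0.
Proof. exact: (om_spec _ _ (FF0 i j) (FF1 i j) (Hc i j)). Qed.

Lemma FF_pos i j t : 0 <= t -> t < ome i j -> 0 < FF i j t.
Proof. exact: (F_pos _ _ (FF0 i j) (FF1 i j) (Hc i j) (Hd i j)). Qed.

Definition upd (x : 'M[R]_(n, m)) i j (t : R) : 'I_m -> R :=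
  fun j' => if j' == j then t else x i j'.

Lemma util_upd (x : 'M[R]_(n, m)) i j t :
  utility Rr p a k i (upd x i j t) x =
  utility Rr p a k i (fun j' => x i j') x
  - x i j `^ a i * FF i j (x i j + xT_excl x i j)
  + t `^ a i * FF i j (t + xT_excl x i j).
Proof.
rewrite /utility (bigD1 j) //= [X in _ = X - _ + _](bigD1 j) //= /upd eqxx.
rewrite (eq_bigr (fun j' => x i j' `^ a i * FF i j' (x i j' + xT_excl x i j'))).
  by ring.
by move=> j' /negbTE ->.
Qed.

Lemma xTE (x : 'M[R]_(n, m)) i j : xT x j = x i j + xT_excl x i j.
Proof. by rewrite /xT /xT_excl (bigD1 i). Qed.

Lemma xTex_ge0 (x : 'M[R]_(n, m)) i j : Cn x -> 0 <= xT_excl x i j.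
Proof.
move=> Cx; apply: sumr_ge0 => l _; by have [/(_ j)/andP[]] := Cx l.
Qed.

Lemma upd_feas (x : 'M[R]_(n, m)) i j t : Cn x -> vartheta Rr p a k i x (fun j' => x i j') ->
  active Rr p a k x i j -> 0 <= t <= ome i j - xT_excl x i j ->
  \sum_j' x i j' - x i j + t <= 1 ->
  vartheta Rr p a k i x (upd x i j t).
Proof.
move=> Cx [_ Hv] act /andP[t0 t1] hs.
have c0 := xTex_ge0 x i j Cx.
have [/andP[om0 om1] _] := ome_spec i j.
split; first split.
- move=> j'; rewrite /upd; case: eqP => _; last by have [] := Cx i.
  by rewrite t0 /=; lra.
- rewrite (bigD1 j) //= /upd eqxx.
  rewrite (eq_bigr (fun j' => x i j')); last by move=> j' /negbTE ->.
  move: hs; rewrite [X in X - _ + _ <= _](bigD1 j) //=; lra.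
- move=> j'; rewrite /upd; case: eqP => [->|_]; last exact: Hv.
  by split; [move=> _; rewrite t0 t1|move/(_ act)].
Qed.

Lemma foc_game (x : 'M[R]_(n, m)) i j : GNE Rr p a k x -> 0 < x i j -> \sum_j' x i j' < 1 ->
  (xT x j < ome i j) /\ (a i * FF i j (xT x j) + x i j * derive1 (FF i j) (xT x j) = 0).
Proof.
move=> [Cx Hx] xij0 hs.
have [Hvi Hopt] := Hx i.
have Hv := Hvi.2.
have c0 := xTex_ge0 x i j Cx.
set c := xT_excl x i j in c0 *.
have [/andP[om0 om1] Fom] := ome_spec i j.
have act : active Rr p a k x i j.
  case: (pselect (active Rr p a k x i j)) => // nact.
  by have := (Hv j).2 nact; lra.
have /andP[xl0 xle] := (Hv j).1 act.
have opt t : 0 <= t <= ome i j - c -> \sum_j' x i j' - x i j + t <= 1 ->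
    t `^ a i * FF i j (t + c) <= x i j `^ a i * FF i j (x i j + c).
  move=> ht hsum; have := Hopt _ (upd_feas _ _ _ _ Cx Hvi act ht hsum).
  rewrite util_upd -/c; lra.
have /andP[a0 a1] := Ha i.
have lt : x i j < ome i j - c.
  rewrite lt_neqAle xle andbT; apply/eqP => E.
  have h1 : 0 <= x i j / 2 <= ome i j - c by apply/andP; split; lra.
  have h2 : \sum_j' x i j' - x i j + x i j / 2 <= 1 by lra.
  have := opt _ h1 h2.
  have -> : x i j + c = ome i j by rewrite E; ring.
  rewrite Fom mulr0 => h.
  have : 0 < (x i j / 2) `^ a i * FF i j (x i j / 2 + c).
    apply: mulr_gt0; first by apply: powR_gt0; lra.
    by apply: FF_pos; lra.
  by rewrite ltNge h.
split; first by rewrite (xTE x i j) -/c; lra.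
rewrite (xTE x i j) -/c.
pose b := Num.min (ome i j - c) (x i j + (1 - \sum_j' x i j')).
have hb1 : b <= ome i j - c by rewrite ge_min lexx.
have hb2 : b <= x i j + (1 - \sum_j' x i j') by rewrite ge_min lexx orbT.
have xb : x i j < b by rewrite lt_min; apply/andP; split; lra.
apply: (foc _ _ (Hd i j) _ _ _ _ a0 c0 xij0 xb); first lra.
move=> t t0 tb; apply: opt; first (apply/andP; split); lra.
Qed.

End Game.
Theorem theorem4 (R : realType) (n m : nat)
  (Rr p : 'I_m -> R -> R) (a k : 'I_n -> R) :
  (1 <= n)%N -> (1 <= m)%N -> (m <= n)%N ->
  (forall j t, 0 <= t -> 1 < Rr j t) ->
  (forall j t, 0 <= t -> 0 <= p j t <= 1) ->
  (forall j, p j 0 = 0) ->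
  (forall j t, 1 <= t -> p j t = 1) ->
  (forall i, 0 < a i <= 1) ->
  (forall i, 0 < k i) ->
  (forall i j, {within `[0, 1], continuous (Feff Rr p a k i j)}) ->
  (forall i j t, 0 < t < 1 ->
     derivable (Feff Rr p a k i j) t 1 /\
     derivable (derive1 (Feff Rr p a k i j)) t 1 /\
     derive1 (Feff Rr p a k i j) t < 0 /\
     derive1 (derive1 (Feff Rr p a k i j)) t < 0) ->
  lebesgue_null (GNE Rr p a k).
Proof.
move=> n0 m0 _ HR _ Hp0 Hp1 Ha Hk Hc Hd.
pose j0 : 'I_m := Ordinal m0.
pose i0 : 'I_n := Ordinal n0.
pose P : set R := [set t | 0 < t /\ (forall i, t < omega Rr p a k i j0) /\
  t = \sum_i (- a i * Feff Rr p a k i j0 t / derive1 (Feff Rr p a k i j0) t)].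
pose r := xget 0 P.
pose v := - a i0 * Feff Rr p a k i0 j0 r / derive1 (Feff Rr p a k i0 j0) r.
pose c (t : ('I_n * 'I_m + ('I_n + unit))%type) : 'I_n * 'I_m :=
  match t with inl ij => ij | inr (inl i) => (i, j0) | inr (inr _) => (i0, j0) end.
pose f (t : ('I_n * 'I_m + ('I_n + unit))%type) (x : 'M[R]_(n, m)) : R :=
  match t with inl _ => 0 | inr (inl i) => 1 - \sum_(j | j != j0) x i j
  | inr (inr _) => v end.
apply: (@graphs_null R n m _ c f m%:R) => //.
- move=> [ij|[i|[]]] x y d d0 H /=.
  + by rewrite subrr normr0 mulr_ge0.
  + have -> : 1 - \sum_(j | j != j0) x i j - (1 - \sum_(j | j != j0) y i j) =
        \sum_(j | j != j0) (y i j - x i j) by rewrite sumrB; ring.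
    apply: le_trans (ler_norm_sum _ _ _) _.
    apply: (@le_trans _ _ (\sum_(j | j != j0) d)).
      apply: ler_sum => j Nj; rewrite distrC; apply: H.
      by rewrite xpair_eqE eqxx.
    rewrite [X in _ <= X](_ : _ = \sum_(j < m) d); last by rewrite sumr_const card_ord mulr_natl.
    rewrite [X in _ <= X](bigD1 j0) //= lerDr //.
  + by rewrite subrr normr0 mulr_ge0.
- move=> x Gx; have Cx := Gx.1.
  have x01 i j : 0 <= x i j <= 1 by have [] := Cx i.
  split => //.
  case: (pselect (exists i j, x i j = 0)) => [[i [j xij]]|nz].
    by exists (inl (i, j)).
  case: (pselect (exists i, \sum_j x i j = 1)) => [[i si]|ns].
    exists (inr (inl i)) => /=.
    by rewrite -si (bigD1 j0) //=; ring.
  exists (inr (inr tt)) => /=.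
  have xpos i j : 0 < x i j.
    have /andP[h _] := x01 i j; rewrite lt_neqAle h andbT.
    by apply/eqP => e; apply: nz; exists i, j.
  have slack i : \sum_j x i j < 1.
    have [_ h] := Cx i; rewrite lt_neqAle h andbT.
    by apply/eqP => e; apply: ns; exists i.
  have fg i := foc_game _ _ _ _ _ _ _ HR Hp0 Hp1 Ha Hk Hc Hd x i j0 Gx (xpos i j0) (slack i).
  have s0 : 0 < xT x j0.
    rewrite (xTE _ _ _ x i0 j0); have := xTex_ge0 _ _ _ x i0 j0 Cx; have := xpos i0 j0; lra.
  have s1 : xT x j0 < 1.
    have [h _] := fg i0; have [/andP[_ o1] _] := ome_spec _ _ _ _ _ _ _ HR Hp0 Hp1 Hk Hc i0 j0; lra.
  have gi i : x i j0 = - a i * Feff Rr p a k i j0 (xT x j0) /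
                        derive1 (Feff Rr p a k i j0) (xT x j0).
    have [_ e] := fg i.
    have hs : 0 < xT x j0 < 1 by rewrite s0 s1.
    have [_ [_ [D0 _]]] := Hd i j0 _ hs.
    have e' : x i j0 * derive1 (Feff Rr p a k i j0) (xT x j0) =
              - a i * Feff Rr p a k i j0 (xT x j0) by lra.
    by rewrite -e'; field; rewrite lt_eqF.
  have Ps : P (xT x j0).
    split => //; split; first by move=> i; have [] := fg i.
    by rewrite {1}/xT; apply: eq_bigr => i _; exact: gi.
  have rs : r = xT x j0.
    apply: (@root_unique R n (fun i => Feff Rr p a k i j0)
      (fun i => derive1 (Feff Rr p a k i j0)) a
      (fun i => omega Rr p a k i j0) r (xT x j0)).
    - by move=> i; have /andP[] := Ha i.
    - move=> i t t0 tom; apply: (FF_pos _ _ _ _ _ _ _ HR Hp0 Hp1 Hk Hc Hd) => //; exact: ltW.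
    - move=> i u w u0 uw wom.
      have [/andP[_ o1] _] := ome_spec _ _ _ _ _ _ _ HR Hp0 Hp1 Hk Hc i j0.
      split; first by apply: (F_decr _ _ (Hc i j0) (Hd i j0)); lra.
      by apply: (Fd_nincr _ _ (Hd i j0)); lra.
    - move=> i t t0 tom.
      have [/andP[_ o1] _] := ome_spec _ _ _ _ _ _ _ HR Hp0 Hp1 Hk Hc i j0.
      have ht : 0 < t < 1 by apply/andP; split; lra.
      have [_ [_ [D0 _]]] := Hd i j0 _ ht.
      exact: D0.
    - exact: (xgetPex 0 (ex_intro _ _ Ps)).
    - exact: Ps.
  by rewrite /v -/r rs; exact: gi.
Qed.
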